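(* Let $(\mathfrak S_A,\mathfrak E_A,\epsilon^{\mathfrak S_A})$ and $(\mathfrak S_B,\mathfrak E_B,\epsilon^{\mathfrak S_B})$ be States/Effects Chu spaces whose spaces of states admit a description in terms of pure states. Then the set of completely meet-irreducible elements of $\mathfrak S_A\widetilde{\otimes}\mathfrak S_B$ equals $$\{\sigma_A\widetilde{\otimes}\sigma_B\mid\sigma_A\in\mathfrak S_A^{pure},\ \sigma_B\in\mathfrak S_B^{pure}\},$$ and this set equals the set of maximal elements of $\mathfrak S_A\widetilde{\otimes}\mathfrak S_B$.
   Context: The boolean domain is $\mathfrak{B}=\{Y,N,\bot\}$, ordered by $u\le v$ iff $u=\bot$ or $u=v$; nonempty infima $\bigwedge$: $Y$ (resp. $N$) if all members are $Y$ (resp. $N$), else $\bot$. Product $\bullet$: $x\bullet Y=x$, $x\bullet N=N$, $\bot\bullet\bot=\bot$ (commutative); involution $\overline{\bot}=\bot$, $\overline{Y}=N$, $\overline{N}=Y$. A space of states is a poset $(\mathfrak S,\sqsubseteq)$ with bottom $\bot_{\mathfrak S}$ in which every nonempty subset has an infimum. The natural space of effects $\mathfrak E_{\mathfrak S}$ consists of formal symbols $\mathfrak l_{(\sigma,\sigma')}$ ($\sigma,\sigma'$ with no common upper bound), $\mathfrak l_{(\sigma,\cdot)}$, $\mathfrak l_{(\cdot,\sigma)}$, $\mathfrak l_{(\cdot,\cdot)}$, with evaluation $\epsilon_{\mathfrak l_{(a,b)}}(\sigma)=Y$ if $a\sqsubseteq\sigma$, $N$ if $b\sqsubseteq\sigma$,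 $\bot$ otherwise (''$\cdot\sqsubseteq\sigma$'' false), ordered by pointwise comparison of evaluations (nonempty infima exist and are pointwise). $\overline{\mathfrak l_{(a,b)}}=\mathfrak l_{(b,a)}$, $\mathfrak Y_{\mathfrak E}=\mathfrak l_{(\bot_{\mathfrak S},\cdot)}$, $\bot_{\mathfrak E}=\mathfrak l_{(\cdot,\cdot)}$. A States/Effects Chu space $(\mathfrak S,\mathfrak E,\epsilon)$: $\mathfrak E\subseteq\mathfrak E_{\mathfrak S}$ such that (i) each $\sigma\ne\bot_{\mathfrak S}$ has some $\sigma'\ne\bot_{\mathfrak S}$ with $\mathfrak l_{(\sigma,\sigma')}\in\mathfrak E$; (ii) $\mathfrak E$ is closed under nonempty infima of $\mathfrak E_{\mathfrak S}$; (iii) closed under bar; (iv) contains $\mathfrak Y_{\mathfrak E},\bot_{\mathfrak E}$. $\mathfrak S$ admits a description in terms of pure states if its set $\mathfrak S^{pure}$ of completely meet-irreducible elements equals its set of maximal elements and every $\sigma$ is the infimum of the pure states above it. The pure tensor $\sigma_A\widetilde{\otimes}\sigma_B$ is the map $\mathfrak E_A\times\mathfrak E_B\to\mathfrak B$, $(\mathfrak l_A,\mathfrak l_B)\mapsto\epsilon^{\mathfrak S_A}_{\mathfrak l_A}(\sigma_A)\bullet\epsilon^{\mathfrak S_B}_{\mathfrak l_B}(\sigma_B)$; the minimal tensor product $\mathfrak S_A\widetilde{\otimes}\mathfrak S_B$ is the set of pointwise infima of nonempty families of pure tensors, ordered pointwise (it is closed under infima of nonempty subsets). *)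

(* Defs.v *)
From Stdlib Require Import Classical ClassicalDescription.



Inductive B3 : Type := BY | BN | Bbot.

Definition leB (u v : B3) : Prop := u = Bbot \/ u = v.

Definition prodB (x y : B3) : B3 :=
  match x, y with
  | _, BY => x
  | _, BN => BN
  | BY, Bbot => Bbot
  | BN, Bbot => BN
  | Bbot, Bbot => Bbot
  end.

Definition barB (x : B3) : B3 :=
  match x with BY => BN | BN => BY | Bbot => Bbot end.

Section Order.
Variable X : Type.
Variable D : X -> Prop.
Variable le : X -> X -> Prop.

Definition is_lb (Y : X -> Prop) (x : X) : Prop := forall y, Y y -> le x y.

Definition is_glb_in (Y : X -> Prop) (x : X) : Prop :=
  D x /\ is_lb Y x /\ (forall z, D z -> is_lb Y z -> le z x).

(** completely meet-irreducible in D: whenever x is the infimum (in D) of a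
    subset Y of D (Y possibly empty), x belongs to Y *)
Definition cmi_in (x : X) : Prop :=
  D x /\ forall Y : X -> Prop, (forall y, Y y -> D y) -> is_glb_in Y x -> Y x.

Definition maximal_in (x : X) : Prop :=
  D x /\ forall y, D y -> le x y -> y = x.
End Order.
Arguments is_lb {X}.
Arguments is_glb_in {X}.
Arguments cmi_in {X}.
Arguments maximal_in {X}.

Definition everything {X : Type} : X -> Prop := fun _ => True.

Definition is_state_space {S : Type} (le : S -> S -> Prop) (bot : S) : Prop :=
  (forall x, le x x) /\
  (forall x y z, le x y -> le y z -> le x z) /\
  (forall x y, le x y -> le y x -> x = y) /\
  (forall x, le bot x) /\
  (forall Y : S -> Prop, (exists y, Y y) -> exists x, is_glb_in everything le Y x).

Definition pure {S : Type} (le : S -> S -> Prop) (s : S) : Prop :=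
  cmi_in everything le s.

Definition maximal {S : Type} (le : S -> S -> Prop) (s : S) : Prop :=
  maximal_in everything le s.

Definition pure_description {S : Type} (le : S -> S -> Prop) : Prop :=
  (forall s, pure le s <-> maximal le s) /\
  (forall s, is_glb_in everything le (fun p => pure le p /\ le s p) s).

(** The formal symbol l_(a,b), where [None] stands for the dot. *)
Inductive eff_sym (S : Type) : Type := Eff (a b : option S).
Arguments Eff {S} a b.

Definition eff_valid {S : Type} (le : S -> S -> Prop) (e : eff_sym S) : Prop :=
  match e with
  | Eff (Some s) (Some s') => ~ exists u, le s u /\ le s' u
  | _ => True
  end.

Definition decP (P : Prop) : bool :=
  if excluded_middle_informative P then true else false.

Definition eval {S : Type} (le : S -> S -> Prop) (e : eff_sym S) (s : S) : B3 :=
  match e with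
  | Eff a b =>
      let yes := match a with Some x => decP (le x s) | None => false end in
      let no := match b with Some y => decP (le y s) | None => false end in
      if yes then BY else if no then BN else Bbot
  end.

Definition eff_le {S : Type} (le : S -> S -> Prop) (e f : eff_sym S) : Prop :=
  forall s, leB (eval le e s) (eval le f s).

Definition eff_bar {S : Type} (e : eff_sym S) : eff_sym S :=
  match e with Eff a b => Eff b a end.

Definition is_chu {S : Type} (le : S -> S -> Prop) (bot : S)
    (E : eff_sym S -> Prop) : Prop :=
  (forall e, E e -> eff_valid le e) /\
  (forall s, s <> bot -> exists s', s' <> bot /\ E (Eff (Some s) (Some s'))) /\
  (forall (F : eff_sym S -> Prop) e,
      (forall f, F f -> E f) -> (exists f, F f) ->
      is_glb_in (eff_valid le) (eff_le le) F e -> E e) /\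
  (forall e, E e -> E (eff_bar e)) /\
  E (Eff (Some bot) None) /\ E (Eff None None).

Definition tens {SA SB : Type} (EA : eff_sym SA -> Prop) (EB : eff_sym SB -> Prop)
  : Type := {e | EA e} -> {f | EB f} -> B3.

Definition pure_tensor {SA SB : Type} (leA : SA -> SA -> Prop) (leB' : SB -> SB -> Prop)
    (EA : eff_sym SA -> Prop) (EB : eff_sym SB -> Prop) (sA : SA) (sB : SB)
  : tens EA EB :=
  fun e f => prodB (eval leA (proj1_sig e) sA) (eval leB' (proj1_sig f) sB).

Definition tens_le {SA SB : Type} {EA : eff_sym SA -> Prop} {EB : eff_sym SB -> Prop}
    (t u : tens EA EB) : Prop :=
  forall e f, leB (t e f) (u e f).

Definition in_min_tensor {SA SB : Type} (leA : SA -> SA -> Prop) (leB' : SB -> SB -> Prop)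
    (EA : eff_sym SA -> Prop) (EB : eff_sym SB -> Prop) (t : tens EA EB) : Prop :=
  exists F : SA -> SB -> Prop, (exists sA sB, F sA sB) /\
    forall e f, is_glb_in everything leB
                  (fun v => exists sA sB, F sA sB /\ v = pure_tensor leA leB' EA EB sA sB e f)
                  (t e f).

(* Main.v *)
Require Import Defs.
From Stdlib Require Import Classical ClassicalDescription FunctionalExtensionality.

Lemma decP_cases (P : Prop) : (P /\ decP P = true) \/ (~P /\ decP P = false).
Proof. unfold decP; destruct (excluded_middle_informative P); auto. Qed.

Ltac dcase P := let H := fresh "Hd" in let E := fresh "Ed" in
  destruct (decP_cases P) as [[H E]|[H E]]; try rewrite E.

Ltac fin := split; intros H; try discriminate; try reflexivity;
  repeat match goal with
  | H : exists _, _ |- _ => destruct H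
  | H : _ /\ _ |- _ => destruct H
  | H : Some _ = Some _ |- _ => injection H as <-
  | H : None = Some _ |- _ => discriminate H
  end; eauto; try contradiction;
  try (split; [intros [? [HH1 HH2]]; first [discriminate HH1 | injection HH1 as <-; contradiction] | eauto]);
  try (exfalso; eauto).

Lemma eval_Y {S} (le : S -> S -> Prop) a b s :
  eval le (Eff a b) s = BY <-> exists x, a = Some x /\ le x s.
Proof.
  unfold eval; destruct a as [x|]; destruct b as [y|]; cbn zeta iota;
  [dcase (le x s); dcase (le y s) | dcase (le x s) | dcase (le y s) | ]; fin.
Qed.

Lemma eval_N {S} (le : S -> S -> Prop) a b s :
  eval le (Eff a b) s = BN <->
  (~ exists x, a = Some x /\ le x s) /\ exists y, b = Some y /\ le y s.
Proof.
  unfold eval; destruct a as [x|]; destruct b as [y|]; cbn zeta iota;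
  [dcase (le x s); dcase (le y s) | dcase (le x s) | dcase (le y s) | ]; fin.
  all: try (split; [intros [? [HH1 HH2]]; discriminate | eauto]).
Qed.

Lemma mono_eval {S} (le : S -> S -> Prop)
  (trans : forall x y z, le x y -> le y z -> le x z) e s p :
  eff_valid le e -> le s p -> leB (eval le e s) (eval le e p).
Proof.
  destruct e as [a b]. intros V Hsp. destruct (eval le (Eff a b) s) eqn:E.
  - right. symmetry. apply eval_Y in E. destruct E as [x [-> H]]. apply eval_Y. eauto.
  - right. symmetry. apply eval_N in E as [E1 [y [-> Hy]]]. apply eval_N.
    split; [|eauto]. intros [x [-> Hx]]. simpl in V. apply V. exists p; eauto.
  - left; reflexivity.
Qed.

Lemma glb_eval {S} (le : S -> S -> Prop)
  (trans : forall x y z, le x y -> le y z -> le x z) P s e c :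
  is_glb_in everything le P s -> (exists p, P p) ->
  (forall p, P p -> eval le e p = c) -> c <> Bbot -> eval le e s = c.
Proof.
  destruct e as [a b]. intros [_ [Hlb Hg]] [p0 Hp0] Hall Hc.
  destruct c; [ | | congruence].
  - apply eval_Y. pose proof (Hall p0 Hp0) as H0. apply eval_Y in H0 as [x [-> _]].
    exists x; split; auto. apply Hg; [exact I|]. intros p Pp.
    pose proof (Hall p Pp) as H. apply eval_Y in H as [x' [Hx' Hl]].
    injection Hx' as <-. exact Hl.
  - apply eval_N. pose proof (Hall p0 Hp0) as H0.
    apply eval_N in H0 as [H0n [y [-> _]]]. split.
    + intros [x [-> Hx]]. apply H0n. exists x; split; auto.
      eapply trans; [exact Hx| apply Hlb; exact Hp0].
    + exists y; split; auto. apply Hg; [exact I|]. intros p Pp.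
      pose proof (Hall p Pp) as H. apply eval_N in H as [_ [y' [Hy' Hl]]].
      injection Hy' as <-. exact Hl.
Qed.

Lemma pure_above {S} (le : S -> S -> Prop) bot :
  is_state_space le bot -> pure_description le -> forall s, exists p, pure le p /\ le s p.
Proof.
  intros [Hr [Ht [Ha [Hb Hi]]]] [Hpm Hglb] s. apply NNPP; intro Hn.
  destruct (Hglb s) as [_ [_ Hg]].
  assert (Hm : maximal le s).
  { split; [exact I|]. intros y _ Hsy. apply Ha; [|exact Hsy].
    apply Hg; [exact I|]. intros p [Pp Hsp]. exfalso; apply Hn; eauto. }
  apply Hn; exists s; split; [apply Hpm; exact Hm | apply Hr].
Qed.

Lemma leB_trans x y z : leB x y -> leB y z -> leB x z.
Proof. unfold leB; intros [H|H] [H'|H']; subst; auto. Qed.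
Lemma leB_antisym x y : leB x y -> leB y x -> x = y.
Proof. unfold leB; intros [H|H] [H'|H']; subst; auto. Qed.
Lemma leB_nonbot c v : leB c v -> c <> Bbot -> v = c.
Proof. unfold leB; intros [H|H] Hc; subst; auto; contradiction. Qed.
Lemma prodB_mono x x' y y' : leB x x' -> leB y y' -> leB (prodB x y) (prodB x' y').
Proof. unfold leB; destruct x, x', y, y'; simpl; intuition discriminate. Qed.
Lemma prodB_Y x y : prodB x y = BY -> x = BY /\ y = BY.
Proof. destruct x, y; simpl; intuition discriminate. Qed.
Lemma prodB_N x y : prodB x y = BN -> x = BN \/ y = BN.
Proof. destruct x, y; simpl; intuition discriminate. Qed.
Lemma prodB_xY x : prodB x BY = x. Proof. destruct x; reflexivity. Qed.
Lemma prodB_Yx x : prodB BY x = x. Proof. destruct x; reflexivity. Qed.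
Lemma prodB_xN x : prodB x BN = BN. Proof. destruct x; reflexivity. Qed.
Lemma prodB_Nx x : prodB BN x = BN. Proof. destruct x; reflexivity. Qed.

Theorem mainTheorem6
  (SA : Type) (leA : SA -> SA -> Prop) (botA : SA) (EA : eff_sym SA -> Prop)
  (SB : Type) (leB' : SB -> SB -> Prop) (botB : SB) (EB : eff_sym SB -> Prop)
  (hSA : is_state_space leA botA) (hSB : is_state_space leB' botB)
  (hEA : is_chu leA botA EA) (hEB : is_chu leB' botB EB)
  (pA : pure_description leA) (pB : pure_description leB') :
  (forall t : tens EA EB,
     cmi_in (in_min_tensor leA leB' EA EB) tens_le t <->
     exists sA sB, pure leA sA /\ pure leB' sB /\ t = pure_tensor leA leB' EA EB sA sB) /\
  (forall t : tens EA EB,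
     maximal_in (in_min_tensor leA leB' EA EB) tens_le t <->
     exists sA sB, pure leA sA /\ pure leB' sB /\ t = pure_tensor leA leB' EA EB sA sB).
Proof.
  pose proof (pure_above _ _ hSA pA) as abA.
  pose proof (pure_above _ _ hSB pB) as abB.
  destruct hSA as [rA [tA [aA [bA iA]]]].
  destruct hSB as [rB [tB [aB [bB iB]]]].
  destruct hEA as [vA [iEA [_ [_ [yA _]]]]].
  destruct hEB as [vB [iEB [_ [_ [yB _]]]]].
  destruct pA as [pmA glA]. destruct pB as [pmB glB].
  assert (ptD : forall a b, in_min_tensor leA leB' EA EB (pure_tensor leA leB' EA EB a b)).
  { intros a b. exists (fun x y => x = a /\ y = b). split; [exists a, b; auto|].
    intros e f. split; [exact I|split].
    - intros v [x [y [[-> ->] ->]]]. right; reflexivity.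
    - intros z _ Hz. apply Hz. exists a, b; auto. }
  assert (ttrans : forall t u w : tens EA EB, tens_le t u -> tens_le u w -> tens_le t w).
  { intros t u w H1 H2 e f. eapply leB_trans; eauto. }
  assert (tanti : forall t u : tens EA EB, tens_le t u -> tens_le u t -> t = u).
  { intros t u H1 H2. apply functional_extensionality; intro e.
    apply functional_extensionality; intro f. apply leB_antisym; auto. }
  assert (Dlb : forall t, in_min_tensor leA leB' EA EB t ->
     exists a b, tens_le t (pure_tensor leA leB' EA EB a b)).
  { intros t [F [[a [b Fab]] Hg]]. exists a, b. intros e f.
    destruct (Hg e f) as [_ [Hl _]]. apply Hl. exists a, b; auto. }
  assert (LA : forall sA sB a b, tens_le (pure_tensor leA leB' EA EB sA sB)
                  (pure_tensor leA leB' EA EB a b) -> leA sA a).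
  { intros sA sB a b H. destruct (classic (sA = botA)) as [->|Hne]; [apply bA|].
    destruct (iEA sA Hne) as [s' [_ Hs']].
    specialize (H (exist _ _ Hs') (exist _ _ yB)). unfold pure_tensor in H; cbn [proj1_sig] in H.
    assert (E1 : eval leA (Eff (Some sA) (Some s')) sA = BY) by (apply eval_Y; eauto).
    assert (E2 : forall s, eval leB' (Eff (Some botB) None) s = BY) by (intro; apply eval_Y; eauto).
    rewrite E1, !E2, !prodB_xY in H.
    destruct H as [H|H]; [discriminate|]. symmetry in H.
    apply eval_Y in H as [x [Hx Hl]]. injection Hx as <-. exact Hl. }
  assert (LB : forall sA sB a b, tens_le (pure_tensor leA leB' EA EB sA sB)
                  (pure_tensor leA leB' EA EB a b) -> leB' sB b).
  { intros sA sB a b H. destruct (classic (sB = botB)) as [->|Hne]; [apply bB|].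
    destruct (iEB sB Hne) as [s' [_ Hs']].
    specialize (H (exist _ _ yA) (exist _ _ Hs')). unfold pure_tensor in H; cbn [proj1_sig] in H.
    assert (E1 : eval leB' (Eff (Some sB) (Some s')) sB = BY) by (apply eval_Y; eauto).
    assert (E2 : forall s, eval leA (Eff (Some botA) None) s = BY) by (intro; apply eval_Y; eauto).
    rewrite E1, !E2, !prodB_Yx in H.
    destruct H as [H|H]; [discriminate|]. symmetry in H.
    apply eval_Y in H as [x [Hx Hl]]. injection Hx as <-. exact Hl. }
  assert (Mono : forall a b p q, leA a p -> leB' b q ->
     tens_le (pure_tensor leA leB' EA EB a b) (pure_tensor leA leB' EA EB p q)).
  { intros a b p q H1 H2 e f. unfold pure_tensor. apply prodB_mono; apply mono_eval; auto.
    - apply vA, proj2_sig.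
    - apply vB, proj2_sig. }
  assert (MP : forall sA sB, pure leA sA -> pure leB' sB ->
     maximal_in (in_min_tensor leA leB' EA EB) tens_le (pure_tensor leA leB' EA EB sA sB)).
  { intros sA sB HA HB. split; [apply ptD|]. intros y Dy Hle.
    destruct (Dlb y Dy) as [a [b Hab]].
    assert (H1 := ttrans _ _ _ Hle Hab).
    assert (ea : a = sA) by (apply (proj2 (proj1 (pmA sA) HA)); [exact I| exact (LA _ _ _ _ H1)]).
    assert (eb : b = sB) by (apply (proj2 (proj1 (pmB sB) HB)); [exact I| exact (LB _ _ _ _ H1)]).
    subst. apply tanti; auto. }
  split; intro t; split.
  -
    intros [[F [[a0 [b0 Fab0]] Hg]] Hc].
    destruct (Hc (fun u => exists a b, F a b /\ u = pure_tensor leA leB' EA EB a b))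
      as [a [b [Fab ->]]].
    { intros u [a [b [_ ->]]]. apply ptD. }
    { split; [exists F; split; [exists a0, b0; auto | exact Hg]|split].
      - intros u [a [b [Fab ->]]] e f. destruct (Hg e f) as [_ [Hl _]]. apply Hl; eauto.
      - intros z _ Hz e f. destruct (Hg e f) as [_ [_ Hgg]]. apply Hgg; [exact I|].
        intros v [a [b [Fab ->]]]. apply (Hz _ (ex_intro _ a (ex_intro _ b (conj Fab eq_refl)))). }
    destruct (Hc (fun u => exists p q, pure leA p /\ leA a p /\ pure leB' q /\ leB' b q /\
                        u = pure_tensor leA leB' EA EB p q)) as [p [q [Pp [_ [Pq [_ ->]]]]]].
    { intros u [p [q [_ [_ [_ [_ ->]]]]]]. apply ptD. }
    { split; [apply ptD|split].
      - intros u [p [q [_ [H1 [_ [H2 ->]]]]]]. apply Mono; auto.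
      - intros z _ Hz e f.
        destruct (z e f) eqn:Ez; [ | | left; reflexivity]; right; symmetry.
        + assert (Hall : forall p q, pure leA p -> leA a p -> pure leB' q -> leB' b q ->
            prodB (eval leA (proj1_sig e) p) (eval leB' (proj1_sig f) q) = BY).
          { intros p q H1 H2 H3 H4.
            pose proof (Hz _ (ex_intro _ p (ex_intro _ q (conj H1 (conj H2 (conj H3 (conj H4 eq_refl)))))) e f) as H.
            rewrite Ez in H. apply leB_nonbot in H; [exact H|discriminate]. }
          unfold pure_tensor.
          destruct (abA a) as [p0 [Pp0 Hap0]]. destruct (abB b) as [q0 [Pq0 Hbq0]].
          rewrite (glb_eval leA tA (fun p => pure leA p /\ leA a p) a (proj1_sig e) BY (glA a));
            [ | exists p0; auto | intros p [H1 H2]; exact (proj1 (prodB_Y _ _ (Hall p q0 H1 H2 Pq0 Hbq0))) | discriminate].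
          rewrite (glb_eval leB' tB (fun q => pure leB' q /\ leB' b q) b (proj1_sig f) BY (glB b));
            [ | exists q0; auto | intros q [H3 H4]; exact (proj2 (prodB_Y _ _ (Hall p0 q Pp0 Hap0 H3 H4))) | discriminate].
          reflexivity.
        + assert (Hall : forall p q, pure leA p -> leA a p -> pure leB' q -> leB' b q ->
            prodB (eval leA (proj1_sig e) p) (eval leB' (proj1_sig f) q) = BN).
          { intros p q H1 H2 H3 H4.
            pose proof (Hz _ (ex_intro _ p (ex_intro _ q (conj H1 (conj H2 (conj H3 (conj H4 eq_refl)))))) e f) as H.
            rewrite Ez in H. apply leB_nonbot in H; [exact H|discriminate]. }
          unfold pure_tensor.
          destruct (abA a) as [p0 [Pp0 Hap0]]. destruct (abB b) as [q0 [Pq0 Hbq0]].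
          destruct (classic (forall p, pure leA p /\ leA a p -> eval leA (proj1_sig e) p = BN)) as [HN|HN].
          * rewrite (glb_eval leA tA (fun p => pure leA p /\ leA a p) a (proj1_sig e) BN (glA a));
              [apply prodB_Nx | exists p0; auto | exact HN | discriminate].
          * apply not_all_ex_not in HN as [p1 Hp1]. apply imply_to_and in Hp1 as [[H1 H2] Hne].
            rewrite (glb_eval leB' tB (fun q => pure leB' q /\ leB' b q) b (proj1_sig f) BN (glB b));
              [apply prodB_xN | exists q0; auto | | discriminate].
            intros q [H3 H4]. destruct (prodB_N _ _ (Hall p1 q H1 H2 H3 H4)); [contradiction|assumption]. }
    exists p, q; auto.
  - intros [sA [sB [HA [HB ->]]]]. split; [apply ptD|].
    intros Y HY Hglb. destruct (classic (exists y, Y y)) as [[y Yy]|nY].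
    + destruct Hglb as [_ [Hlb _]]. pose proof (Hlb y Yy) as Hl.
      rewrite <- ((proj2 (MP sA sB HA HB)) y (HY y Yy) Hl). exact Yy.
    + exfalso. destruct HA as [_ HA']. apply (HA' (fun _ => False)); [intros; contradiction|].
      split; [exact I|split; [intros ? []|]].
      intros s _ _. destruct (abA s) as [p [Pp Hsp]].
      destruct Hglb as [_ [_ Hg]].
      assert (H := Hg (pure_tensor leA leB' EA EB p sB) (ptD _ _)
                      (fun y Yy => False_ind _ (nY (ex_intro _ y Yy)))).
      pose proof (LA _ _ _ _ H) as Hp.
      assert (ep : sA = p) by (apply (proj2 (proj1 (pmA p) Pp)); [exact I|exact Hp]).
      subst; exact Hsp.
  - intros [Dt Hm]. destruct (Dlb t Dt) as [a [b Hab]].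
    destruct (abA a) as [p [Pp Hap]]. destruct (abB b) as [q [Pq Hbq]].
    exists p, q. split; [auto|split; [auto|]]. symmetry. apply Hm; [apply ptD|].
    eapply ttrans; [exact Hab| apply Mono; auto].
  - intros [sA [sB [HA [HB ->]]]]. apply MP; auto.
Qed.
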